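(* $\phi(x_0)=-1$.
   Context: Variables $x_i$, $i\in\mathbb{Z}$, commute. A signed graph is a finite graph (loops and multiple edges allowed) with $\mathrm{sgn}:E\to\{+,-\}$; a coloring $\kappa:V\to\mathbb{Z}$ is proper if $\kappa(u)\ne\mathrm{sgn}(e)\kappa(v)$ for every edge $e$ with endpoints $u,v$. An orientation assigns to each half-edge (a loop has two) an arrow toward or away from the vertex, such that on a positive edge exactly one of the two arrows points toward its vertex and on a negative edge both point toward or both point away. A cycle is a closed walk in which, considering only the edges of the walk, every vertex of the walk has at least one arrow pointing into it and one pointing out of it; an orientation is acyclic if it has no cycle; a sink is a vertex all of whose incident arrows point toward it (an isolated vertex is a sink). A signed poset is an acyclic orientation $P$ of a signed graph. A proper coloring $\kappa$ preserves $P$ if for every edge $e$ and each endpoint $v$ of $e$, with $u$ the other endpoint ($u=v$ for a loop), the arrow of $P$ at the incidence of $e$ with $v$ points toward $v$ iff $\kappa(v)>\mathrm{sgn}(e)\kappa(u)$. $Y_P=\sum_\kappa\prod_v x_{\kappa(v)}$ over proper colorings preserving $P$; $\mathbb{Y}$ is the $\mathbb{Q}$-span of all $Y_P$ (it is closed under products and contains $x_0$). $\phi:\mathbb{Y}\to\mathbb{Q}[t]$ is the (unique) $\mathbb{Q}$-linear map with $\phi(Y_P)=t^{\mathrm{sink}(P)}$, $\mathrm{sink}(P)$ the number of sinks of $P$ (its existence is established in the paper). *)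

(* Defs.v *)
From HB Require Import structures.
From mathcomp Require Import all_boot all_order all_algebra.
Set Implicit Arguments. Unset Strict Implicit. Unset Printing Implicit Defensive.
Import Order.TTheory GRing.Theory Num.Theory.
Local Open Scope ring_scope.

(* A signed graph with vertex set 'I_n and edge set 'I_m (loops and multiple
   edges allowed): edge e has endpoints e1 e, e2 e (a loop when e1 e = e2 e)
   and sign sgn e (true = positive, false = negative).
   An orientation assigns to the incidence of e with e1 e (resp. e2 e) the
   boolean in1 e (resp. in2 e): true iff the arrow points toward that vertex. *)

Section Raw.
Variables (n m : nat) (e1 e2 : 'I_m -> 'I_n) (sgn in1 in2 : 'I_m -> bool).

Definition orientation_ok : Prop :=
  forall e, in1 e = (if sgn e then ~~ in2 e else in2 e).

Definition arrow_into (e : 'I_m) (w : 'I_n) : bool :=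
  ((e1 e == w) && in1 e) || ((e2 e == w) && in2 e).
Definition arrow_out (e : 'I_m) (w : 'I_n) : bool :=
  ((e1 e == w) && ~~ in1 e) || ((e2 e == w) && ~~ in2 e).

Definition has_cycle : Prop :=
  exists (k : nat) (ve : nat -> 'I_n) (ee : nat -> 'I_m),
    [/\ (0 < k)%N, ve k = ve 0%N,
        (forall i, (i < k)%N ->
           (e1 (ee i) = ve i /\ e2 (ee i) = ve i.+1) \/
           (e2 (ee i) = ve i /\ e1 (ee i) = ve i.+1))
      & (forall i, (i < k)%N ->
           (exists2 j, (j < k)%N & arrow_into (ee j) (ve i)) /\
           (exists2 j, (j < k)%N & arrow_out (ee j) (ve i)))].

Definition acyclic : Prop := ~ has_cycle.

(* sink: all incident arrows point toward it (isolated vertices are sinks) *)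
Definition is_sink (v : 'I_n) : bool :=
  [forall e : 'I_m, ((e1 e == v) ==> in1 e) && ((e2 e == v) ==> in2 e)].

Definition nsinks : nat := #|[pred v : 'I_n | is_sink v]|.

Definition esign (e : 'I_m) : int := if sgn e then 1 else -1.

Definition proper (kappa : 'I_n -> int) : bool :=
  [forall e : 'I_m, kappa (e1 e) != esign e * kappa (e2 e)].

Definition preserves (kappa : 'I_n -> int) : bool :=
  [forall e : 'I_m,
     (in1 e == (esign e * kappa (e2 e) < kappa (e1 e))) &&
     (in2 e == (esign e * kappa (e1 e) < kappa (e2 e)))].

End Raw.

Record signed_poset := SignedPoset {
  sp_n : nat;
  sp_m : nat;
  sp_e1 : 'I_sp_m -> 'I_sp_n;
  sp_e2 : 'I_sp_m -> 'I_sp_n;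
  sp_sgn : 'I_sp_m -> bool;
  sp_in1 : 'I_sp_m -> bool;
  sp_in2 : 'I_sp_m -> bool;
  sp_orient : orientation_ok sp_sgn sp_in1 sp_in2;
  sp_acyclic : acyclic sp_e1 sp_e2 sp_in1 sp_in2
}.

Arguments sp_e1 : clear implicits.
Arguments sp_e2 : clear implicits.
Arguments sp_sgn : clear implicits.
Arguments sp_in1 : clear implicits.
Arguments sp_in2 : clear implicits.

Definition sinks (P : signed_poset) : nat :=
  nsinks (sp_e1 P) (sp_e2 P) (sp_in1 P) (sp_in2 P).

(* Formal power series in commuting variables x_i (i : int) with rational
   coefficients: a monomial prod_j x_(s_j) is represented by the list s of its
   indices (with multiplicity, any order); a series is its coefficient
   function.  (Coefficients of all series considered here are invariant
   under permutation of s.) *)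
Definition series := seq int -> rat.

(* Coefficient of the monomial s in Y_P: the number of proper colorings kappa
   preserving P with prod_v x_(kappa v) = the monomial s.  Such a kappa takes
   values in s, so we enumerate kappa as finite functions into seq_sub s. *)
Definition Ycoef (P : signed_poset) (s : seq int) : rat :=
  (#|[pred g : {ffun 'I_(sp_n P) -> seq_sub s} |
      let kappa := fun v => ssval (g v) in
      [&& perm_eq [seq kappa v | v <- enum 'I_(sp_n P)] s,
          proper (sp_e1 P) (sp_e2 P) (sp_sgn P) kappa &
          preserves (sp_e1 P) (sp_e2 P) (sp_sgn P) (sp_in1 P) (sp_in2 P) kappa]]|)%:R.

Definition Y (P : signed_poset) : series := Ycoef P.

Definition comb (c : seq (rat * signed_poset)) : series :=
  fun s => \sum_(p <- c) p.1 * Y p.2 s.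

Definition phi_comb (c : seq (rat * signed_poset)) : {poly rat} :=
  \sum_(p <- c) p.1 *: 'X^(sinks p.2).

Definition x0 : series := fun s => (s == [:: 0%Z])%:R.

(* Main.v *)
Require Import Defs.
From HB Require Import structures.
From mathcomp Require Import all_boot all_order all_algebra.
From Stdlib Require Import FunctionalExtensionality.
From mathcomp Require Import zify.
Import Order.TTheory GRing.Theory Num.Theory.
Local Open Scope ring_scope.

Lemma Ycoef1 m (e1 e2 : 'I_m -> 'I_1) sgn in1 in2 (o : orientation_ok sgn in1 in2)
  (ac : acyclic e1 e2 in1 in2) s :
  Ycoef (@SignedPoset 1 m e1 e2 sgn in1 in2 o ac) s =
  if s is [:: a] then (Defs.proper e1 e2 sgn (fun _ => a) &&
                       preserves e1 e2 sgn in1 in2 (fun _ => a))%:R else 0.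
Proof.
rewrite /Ycoef /=.
case: s => [|a [|b s]].
- rewrite eq_card0 // => g; rewrite inE; apply/negP => /and3P[/perm_size].
  by rewrite size_map size_enum_ord.
- have Hk : forall g : {ffun 'I_1 -> seq_sub [:: a]}, (fun v => ssval (g v)) = (fun _ => a).
    move=> g; apply: functional_extensionality => v.
    by have := ssvalP (g v); rewrite inE => /eqP.
  set b := (_ && _).
  rewrite (eq_card (B := [pred _ | b])); last first.
    move=> g; rewrite !inE Hk.
    by rewrite /= enum_ordSl enum_ord0 /= perm_refl.
  case: b; last by rewrite eq_card0.
  have -> : #|[pred _ : {ffun 'I_1 -> seq_sub [:: a]} | true]| = #|{ffun 'I_1 -> seq_sub [:: a]}| by apply: eq_card.
  by rewrite card_ffun card_ord card_seq_sub.
- apply/eqP; rewrite pnatr_eq0; apply/eqP; apply: eq_card0 => g; rewrite inE; apply/negP => /and3P[/perm_size].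
  by rewrite size_map size_enum_ord.
Qed.

Lemma forall_I0 (P : pred 'I_0) : [forall e, P e] = true.
Proof. by apply/forallP => -[]. Qed.

Lemma forall_I1 (P : pred 'I_1) : [forall e, P e] = P ord0.
Proof.
apply/forallP/idP => [|H]; first by apply.
by move=> x; rewrite (ord1 x).
Qed.

Lemma card_I1 (P : pred 'I_1) : #|[pred v | P v]| = P ord0.
Proof.
case h: (P ord0).
  rewrite (eq_card (B := 'I_1)) ?card_ord // => x; by rewrite !inE (ord1 x) h.
by apply: eq_card0 => x; rewrite !inE (ord1 x) h.
Qed.

Definition fI0 : 'I_0 -> 'I_1 := fun _ => ord0.
Definition fI1 : 'I_1 -> 'I_1 := fun _ => ord0.

Lemma oiso : orientation_ok (fun _ : 'I_0 => true) (fun _ => true) (fun _ => true).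
Proof. by case. Qed.
Lemma aiso : acyclic fI0 fI0 (fun _ : 'I_0 => true) (fun _ => true).
Proof. by move=> [k [ve [ee _]]]; case: (ee 0%N). Qed.
Definition Piso := @SignedPoset 1 0 fI0 fI0 _ _ _ oiso aiso.

Lemma oin : orientation_ok (fun _ : 'I_1 => false) (fun _ => true) (fun _ => true).
Proof. by []. Qed.
Lemma ain : acyclic fI1 fI1 (fun _ : 'I_1 => true) (fun _ => true).
Proof.
move=> [k [ve [ee [k0 _ _ H]]]]; have [_ [j _ Hj]] := H 0%N k0; move: Hj.
by rewrite /arrow_out /= !andbF.
Qed.
Definition Pin := @SignedPoset 1 1 fI1 fI1 _ _ _ oin ain.

Lemma oout : orientation_ok (fun _ : 'I_1 => false) (fun _ => false) (fun _ => false).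
Proof. by []. Qed.
Lemma aout : acyclic fI1 fI1 (fun _ : 'I_1 => false) (fun _ => false).
Proof.
move=> [k [ve [ee [k0 _ _ H]]]]; have [[j _ Hj] _] := H 0%N k0; move: Hj.
by rewrite /arrow_into /= !andbF.
Qed.
Definition Pout := @SignedPoset 1 1 fI1 fI1 _ _ _ oout aout.

Theorem lemma6p8 (phi : series -> {poly rat}) :
  (forall c : seq (rat * signed_poset), phi (comb c) = phi_comb c) ->
  phi x0 = -1.
Proof.
move=> H.
pose c : seq (rat * signed_poset) := [:: (1, Piso); (-1, Pin); (-1, Pout)].
have E : comb c = x0.
  apply: functional_extensionality => s.
  rewrite /comb !big_cons big_nil /= /Y !Ycoef1.
  case: s => [|a [|b s]] //=; last first.
    have -> : x0 [:: a, b & s] = 0 by rewrite /x0 eqseq_cons andbF.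
    by rewrite !mulr0 !addr0.
  rewrite /Defs.proper /preserves !forall_I0 !forall_I1 /esign /x0 /=.
  rewrite !mul1r !mulN1r eqseq_cons andbT /=.
  have [a0|a0|->] := ltgtP a 0.
  - have h1 : (-a < a) = false by apply/negbTE; rewrite -leNgt; lia.
    have h2 : (a != -a) = true by apply/eqP; lia.
    have h3 : (a == 0) = false by apply/eqP; lia.
    by rewrite h1 h2 /= !(mulr0n, mulr1n, oppr0, addr0, subrr).
  - have h1 : (-a < a) = true by lia.
    have h2 : (a != -a) = true by apply/eqP; lia.
    have h3 : (a == 0) = false by apply/eqP; lia.
    by rewrite h1 h2 /= !(mulr0n, mulr1n, oppr0, addr0, subrr).
  - by rewrite oppr0 /= !addr0.
rewrite -E H /phi_comb !big_cons big_nil /= /sinks /nsinks !card_I1 /is_sink.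
by rewrite forall_I0 !forall_I1 /= scale1r addrA scaleN1r subrr add0r expr0 addr0 scaleN1r.
Qed.
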